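(* Let $A$ be a connectivity class of external positions which is not the frame class, and let $\pi$ be an even permutation of $A$. Then there exists a combination $g$ such that $g(p)=\pi(p)$ for all $p\in A$ and $g(q,l)=(q,l)$ for every external position $q\notin A$ and every $l\in B(q)$.
   Context: Fix integers $k\ge 2$, $n\ge 3$, $M=\{0,\dots,k-1\}$. Positions are $p\in M^n$; $B(p)=\{i:p_i\in\{0,k-1\}\}$, $p$ external if $B(p)\ne\emptyset$ (internal positions are disregarded). For distinct $i,j$, $\psi_{i,j}:M^n\to M^n$ is $(\psi_{i,j}p)_i=k-1-p_j$, $(\psi_{i,j}p)_j=p_i$, other coordinates unchanged; $B(\psi_{i,j}p)=\tau_{ij}(B(p))$ where $\tau_{ij}$ is the transposition of $i,j$. A move is given by distinct $i,j$ and constants $c_l\in M$ ($l\notin\{i,j\}$): it applies $\psi_{i,j}$ to all positions $p$ with $p_l=c_l$ ($l\notin\{i,j\}$) and fixes the others. It also acts on $X=\{(p,l): p\text{ external}, l\in B(p)\}$ (pairs recording the orientation face $l$ of the cubie at $p$) by $(p,l)\mapsto(\psi_{i,j}(p),\tau_{ij}(l))$ for $p$ in its layer, and fixes the other pairs. A combination is a finite sequence of moves, acting on positions and on $X$ by composition. Connectivity classes are the orbits of external positions under combinations. For odd $k$, the frame class is the set of positions with exactly one coordinate in $\{0,k-1\}$ and all other coordinates equal to $(k-1)/2$; for even $k$ there is no frame class. *)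

(* Defs.v *)
From mathcomp Require Import all_boot all_fingroup.
Set Implicit Arguments. Unset Strict Implicit. Unset Printing Implicit Defensive.

Section Cube.
Variables k n : nat.

Definition pos := {ffun 'I_n -> 'I_k}.

Definition Bset (p : pos) : {set 'I_n} :=
  [set i | ((p i : nat) == 0) || ((p i : nat) == k.-1)].

Definition external (p : pos) : bool := Bset p != set0.

Definition psi (i j : 'I_n) (p : pos) : pos :=
  [ffun l => if l == i then rev_ord (p j) else if l == j then p i else p l].

Definition transp (i j l : 'I_n) : 'I_n :=
  if l == i then j else if l == j then i else l.

(* a move: (i, j, c) with i != j; c l for l \notin {i,j} are the layer constants
   (values c i, c j are irrelevant) *)
Definition move := ('I_n * 'I_n * pos)%type.

Definition valid_move (m : move) : bool := m.1.1 != m.1.2.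

Definition in_layer (m : move) (p : pos) : bool :=
  [forall l, ((l != m.1.1) && (l != m.1.2)) ==> (p l == m.2 l)].

Definition move_pos (m : move) (p : pos) : pos :=
  if in_layer m p then psi m.1.1 m.1.2 p else p.

(* action on pairs (p, l), l \in B(p) *)
Definition move_X (m : move) (x : pos * 'I_n) : pos * 'I_n :=
  if in_layer m x.1 then (psi m.1.1 m.1.2 x.1, transp m.1.1 m.1.2 x.2) else x.

(* a combination: finite sequence of moves, the first move applied first *)
Definition combination := seq move.

Definition valid_comb (g : combination) : bool := all valid_move g.

Definition comb_pos (g : combination) (p : pos) : pos :=
  foldl (fun q m => move_pos m q) p g.

Definition comb_X (g : combination) (x : pos * 'I_n) : pos * 'I_n :=
  foldl (fun y m => move_X m y) x g.

Definition connectivity_class (A : {set pos}) : Prop :=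
  exists p0 : pos, external p0 /\
    forall q : pos, q \in A <-> exists g : combination, valid_comb g /\ comb_pos g p0 = q.

Definition frame_set : {set pos} :=
  [set p | (#|Bset p| == 1) && [forall i, (i \notin Bset p) ==> ((p i : nat) == k.-1./2)]].

Definition is_frame_class (A : {set pos}) : bool := odd k && (A == frame_set).
End Cube.

(* Main.v *)
Require Import Defs.
From mathcomp Require Import all_boot all_fingroup zify.
Set Implicit Arguments. Unset Strict Implicit. Unset Printing Implicit Defensive.

Section Comm.
Variables (P L : finType) (l0 : L).
Variables (F F' H H' : P * L -> P * L) (f f' h h' : P -> P).
Hypothesis FK : cancel F F'.
Hypothesis F'K : cancel F' F.
Hypothesis HK : cancel H H'.
Hypothesis H'K : cancel H' H.
Hypothesis Ff : forall u, (F u).1 = f u.1.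
Hypothesis Ff' : forall u, (F' u).1 = f' u.1.
Hypothesis Hh : forall u, (H u).1 = h u.1.
Hypothesis Hh' : forall u, (H' u).1 = h' u.1.
Variable q : P.

Definition fixd (G : P * L -> P * L) p := [forall l, G (p, l) == (p, l)].

Lemma fixdP (G : P * L -> P * L) p : fixd G p -> forall l, G (p, l) = (p, l).
Proof. by move/forallP=> fx l; apply/eqP. Qed.

Hypothesis Hsup : forall p, p != q -> fixd F p || fixd H p.

Lemma fixd_inv (G G' : P * L -> P * L) p : cancel G G' -> fixd G p -> fixd G' p.
Proof. by move=> GK /fixdP fx; apply/forallP=> l; rewrite -{1}(fx l) GK. Qed.

Lemma fixd_img (G : P * L -> P * L) g p : injective G -> (forall u, (G u).1 = g u.1) ->
  fixd G (g p) -> fixd G p.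
Proof.
move=> Gi Gg /fixdP fx; apply/forallP=> l; apply/eqP; apply: Gi.
case E: (G (p, l)) => [p1 l1].
have e : p1 = g p by rewrite -(Gg (p, l)) E.
by rewrite e fx.
Qed.

Lemma fixd_pos (G : P * L -> P * L) g p : (forall u, (G u).1 = g u.1) -> fixd G p -> g p = p.
Proof. by move=> Gg /fixdP fx; rewrite -[g p]/(g (p, l0).1) -Gg fx. Qed.

Lemma ff' p : f' (f p) = p.
Proof. by rewrite -[p]/((p, l0).1) -Ff -Ff' FK. Qed.
Lemma f'f p : f (f' p) = p.
Proof. by rewrite -[p]/((p, l0).1) -Ff' -Ff F'K. Qed.
Lemma hh' p : h' (h p) = p.
Proof. by rewrite -[p]/((p, l0).1) -Hh -Hh' HK. Qed.
Lemma h'h p : h (h' p) = p.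
Proof. by rewrite -[p]/((p, l0).1) -Hh' -Hh H'K. Qed.

Lemma Finj : injective F. Proof. exact: can_inj FK. Qed.
Lemma Hinj : injective H. Proof. exact: can_inj HK. Qed.

Lemma nfix_img_F p : ~~ fixd F p -> ~~ fixd F (f p).
Proof. by apply: contra; apply: (fixd_img Finj Ff). Qed.
Lemma nfix_img_H p : ~~ fixd H p -> ~~ fixd H (h p).
Proof. by apply: contra; apply: (fixd_img Hinj Hh). Qed.

Lemma comm_fix u : u.1 != q -> u.1 != f' q -> u.1 != h' q -> H' (F' (H (F u))) = u.
Proof.
case: u => p l /= pq pf pg.
case: (boolP (fixd F p)) => [fxF|nfF].
  rewrite (fixdP fxF).
  case: (boolP (fixd H p)) => [fxH|nfH].
    by rewrite (fixdP fxH) (fixdP (fixd_inv FK fxF)) (fixdP (fixd_inv HK fxH)).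
  case E: (H (p, l)) => [p1 l1].
  have e1 : p1 = h p by rewrite -(Hh (p, l)) E.
  have hpq : h p != q by apply: contra pg => /eqP <-; rewrite hh'.
  have nfH' := nfix_img_H nfH.
  case/orP: (Hsup hpq) => [fx2|fx2]; last by rewrite fx2 in nfH'.
  by rewrite e1 (fixdP (fixd_inv FK fx2)) -e1 -E HK.
have fxH : fixd H p by case/orP: (Hsup pq) => // fx; rewrite fx in nfF.
case E: (F (p, l)) => [p1 l1].
have e1 : p1 = f p by rewrite -(Ff (p, l)) E.
have fpq : f p != q by apply: contra pf => /eqP <-; rewrite ff'.
have nfF' := nfix_img_F nfF.
case/orP: (Hsup fpq) => [fx2|fx2]; first by rewrite fx2 in nfF'.
by rewrite e1 (fixdP fx2) -e1 -E FK (fixdP (fixd_inv HK fxH)).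
Qed.

Hypothesis fq : f q != q.
Hypothesis hq : h q != q.

Lemma nfixF_q : ~~ fixd F q.
Proof. by apply: contra fq => fx; apply/eqP; exact: (fixd_pos Ff fx). Qed.
Lemma nfixH_q : ~~ fixd H q.
Proof. by apply: contra hq => fx; apply/eqP; exact: (fixd_pos Hh fx). Qed.

Lemma f'q_neq : f' q != q.
Proof. by apply: contra fq => /eqP e; rewrite -{1}e f'f. Qed.
Lemma h'q_neq : h' q != q.
Proof. by apply: contra hq => /eqP e; rewrite -{1}e h'h. Qed.

Lemma fixH_f'q : fixd H (f' q).
Proof.
case/orP: (Hsup f'q_neq) => // fx.
have := fixd_pos Ff fx; rewrite f'f => e.
by move: f'q_neq; rewrite -e eqxx.
Qed.

Lemma fixF_h'q : fixd F (h' q).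
Proof.
case/orP: (Hsup h'q_neq) => // fx.
have := fixd_pos Hh fx; rewrite h'h => e.
by move: h'q_neq; rewrite -e eqxx.
Qed.

Lemma fixF_hq : fixd F (h q).
Proof.
have hq' : h q != q by [].
case/orP: (Hsup hq') => // fx.
by move: (nfix_img_H nfixH_q); rewrite fx.
Qed.

Lemma fixH_fq : fixd H (f q).
Proof.
case/orP: (Hsup fq) => // fx.
by move: (nfix_img_F nfixF_q); rewrite fx.
Qed.

Lemma comm_q : h' (f' (h (f q))) = h' q.
Proof. by rewrite (fixd_pos Hh fixH_fq) ff'. Qed.

Lemma comm_h'q : h' (f' (h (f (h' q)))) = f' q.
Proof.
rewrite (fixd_pos Ff fixF_h'q) h'h.
by rewrite (fixd_pos Hh' (fixd_inv HK fixH_f'q)).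
Qed.

Lemma comm_f'q : h' (f' (h (f (f' q)))) = q.
Proof.
rewrite f'f (fixd_pos Ff' (fixd_inv FK fixF_hq)).
by rewrite hh'.
Qed.

Lemma comm_dist : f' q != h' q.
Proof.
apply/negP => /eqP e.
have := fixH_f'q; rewrite e => fx.
have := fixd_pos Hh fx; rewrite h'h => e2.
by move: h'q_neq; rewrite -e2 eqxx.
Qed.

End Comm.

Section Basic.
Variables k n : nat.
Local Notation pos := (pos k n).
Local Notation move := (move k n).
Implicit Types (p : pos) (m : move) (g : combination k n) (i j l : 'I_n).

Lemma psiE i j p l : psi i j p l = if l == i then rev_ord (p j) else if l == j then p i else p l.
Proof. by rewrite ffunE. Qed.

Lemma psiK i j p : i != j -> psi j i (psi i j p) = p.
Proof.
move=> ij; have ji : j != i by rewrite eq_sym.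
apply/ffunP=> l; rewrite !psiE eqxx (negbTE ji).
case: (eqVneq l j) => [->|lj]; first by rewrite rev_ordK.
by case: (eqVneq l i) => [->|li]; rewrite ?eqxx.
Qed.

Lemma transpK i j l : transp j i (transp i j l) = l.
Proof.
rewrite /transp.
case: (eqVneq l i) => [->|li]; case: (eqVneq i j) => [->|ij]; rewrite ?eqxx //.
  by case: (eqVneq l j) => [->|lj]; rewrite ?eqxx ?(negbTE lj).
  case: (eqVneq l j) => [e|lj]; first by rewrite (negbTE ij) eqxx e.
by rewrite (negbTE lj) (negbTE li).
Qed.

Definition inv_move m : move := (m.1.2, m.1.1, m.2).

Lemma in_layerP m p : reflect (forall l, l != m.1.1 -> l != m.1.2 -> p l = m.2 l) (in_layer m p).
Proof.
apply: (iffP forallP) => [H l l1 l2|H l].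
  by have := H l; rewrite l1 l2 /= => /eqP.
by apply/implyP=> /andP[l1 l2]; apply/eqP; apply: H.
Qed.

Lemma in_layer_inv m p : in_layer (inv_move m) p = in_layer m p.
Proof.
apply/forallP/forallP => H l; have := H l; by rewrite andbC.
Qed.

Lemma in_layer_psi m p : in_layer m (psi m.1.1 m.1.2 p) = in_layer m p.
Proof.
apply/in_layerP/in_layerP => H l l1 l2; have := H l l1 l2; by rewrite psiE (negbTE l1) (negbTE l2).
Qed.

Lemma in_layer_psi' m p : in_layer m (psi m.1.2 m.1.1 p) = in_layer m p.
Proof.
apply/in_layerP/in_layerP => H l l1 l2; have := H l l1 l2; by rewrite psiE (negbTE l1) (negbTE l2).
Qed.

Lemma move_XK m x : valid_move m -> move_X (inv_move m) (move_X m x) = x.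
Proof.
move=> vm; rewrite /move_X; case hl: (in_layer m x.1) => /=.
  by rewrite in_layer_inv in_layer_psi hl /= psiK // transpK; case: x {hl}.
by rewrite in_layer_inv hl.
Qed.

Lemma inv_moveK m : inv_move (inv_move m) = m.
Proof. by case: m => [[]]. Qed.

Lemma valid_inv m : valid_move (inv_move m) = valid_move m.
Proof. by rewrite /valid_move /= eq_sym. Qed.

Lemma move_XKV m x : valid_move m -> move_X m (move_X (inv_move m) x) = x.
Proof. by move=> vm; rewrite -{1}(inv_moveK m) move_XK // valid_inv. Qed.

Lemma move_X_fst m x : (move_X m x).1 = move_pos m x.1.
Proof. by rewrite /move_X /move_pos; case: ifP. Qed.

Lemma comb_X_cat g1 g2 x : comb_X (g1 ++ g2) x = comb_X g2 (comb_X g1 x).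
Proof. by rewrite /comb_X foldl_cat. Qed.

Lemma comb_pos_cat g1 g2 p : comb_pos (g1 ++ g2) p = comb_pos g2 (comb_pos g1 p).
Proof. by rewrite /comb_pos foldl_cat. Qed.

Lemma comb_X_cons m g x : comb_X (m :: g) x = comb_X g (move_X m x).
Proof. by []. Qed.
Lemma comb_pos_cons m g p : comb_pos (m :: g) p = comb_pos g (move_pos m p).
Proof. by []. Qed.

Lemma comb_X_fst g x : (comb_X g x).1 = comb_pos g x.1.
Proof. by elim: g x => [//|m g IH] x; rewrite comb_X_cons comb_pos_cons IH move_X_fst. Qed.

Definition inv_comb g : combination k n := rev (map inv_move g).

Lemma valid_inv_comb g : valid_comb g -> valid_comb (inv_comb g).
Proof.
rewrite /valid_comb /inv_comb all_rev all_map => /allP H; apply/allP=> m hm /=.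
by rewrite valid_inv H.
Qed.

Lemma inv_comb_cons m g : inv_comb (m :: g) = inv_comb g ++ [:: inv_move m].
Proof. by rewrite /inv_comb /= rev_cons cats1. Qed.

Lemma comb_X_invK g x : valid_comb g -> comb_X (inv_comb g) (comb_X g x) = x.
Proof.
elim: g x => [//|m g IH] x /andP[vm vg].
by rewrite inv_comb_cons comb_X_cat comb_X_cons IH //= move_XK.
Qed.

Lemma comb_X_Kinv g x : valid_comb g -> comb_X g (comb_X (inv_comb g) x) = x.
Proof.
elim: g x => [//|m g IH] x /andP[vm vg].
by rewrite inv_comb_cons comb_X_cat comb_X_cons /= move_XKV // IH.
Qed.

Lemma comb_X_move m x : comb_X [:: m] x = move_X m x.
Proof. by []. Qed.
Lemma comb_pos_move m p : comb_pos [:: m] p = move_pos m p.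
Proof. by []. Qed.

Lemma move_posK m p : valid_move m -> move_pos (inv_move m) (move_pos m p) = p.
Proof.
move=> vm; rewrite /move_pos; case hl: (in_layer m p).
  by rewrite in_layer_inv in_layer_psi hl psiK.
by rewrite in_layer_inv hl.
Qed.

Lemma move_posKV m p : valid_move m -> move_pos m (move_pos (inv_move m) p) = p.
Proof. by move=> vm; rewrite -{1}(inv_moveK m) move_posK // valid_inv. Qed.

Lemma comb_pos_invK g p : valid_comb g -> comb_pos (inv_comb g) (comb_pos g p) = p.
Proof.
elim: g p => [//|m g IH] p /andP[vm vg].
by rewrite inv_comb_cons comb_pos_cat comb_pos_cons IH //= move_posK.
Qed.

End Basic.

Local Open Scope group_scope.
Section Cyc.
Variable T : finType.
Implicit Types x y z w : T.

Definition cyc x y z : {perm T} := tperm x y * tperm x z.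

Lemma cycE x y z w : x != y -> y != z -> z != x ->
  cyc x y z w = if w == x then y else if w == y then z else if w == z then x else w.
Proof.
move=> xy yz zx; rewrite permM.
case: (eqVneq w x) => [->|wx]; first by rewrite tpermL tpermD // eq_sym.
case: (eqVneq w y) => [->|wy]; first by rewrite tpermR tpermL.
rewrite (@tpermD _ x y w); [|by rewrite eq_sym|by rewrite eq_sym].
case: (eqVneq w z) => [->|wz]; first by rewrite tpermR.
by rewrite tpermD // eq_sym.
Qed.

Lemma cyc_rot x y z : x != y -> y != z -> z != x -> cyc x y z = cyc y z x.
Proof.
move=> xy yz zx; apply/permP=> w; rewrite !cycE //.
have xz : x != z by rewrite eq_sym.
case: (eqVneq w x) => [->|wx]; first by rewrite (negbTE xy) (negbTE xz).
by [].
Qed.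

Lemma cycV x y z : x != y -> y != z -> z != x -> (cyc x y z)^-1 = cyc x z y.
Proof.
move=> xy yz zx; apply/permP=> w.
apply: (@perm_inj _ (cyc x y z)); rewrite permKV.
have zy : z != y by rewrite eq_sym.
have yx : y != x by rewrite eq_sym.
have xz : x != z by rewrite eq_sym.
rewrite [cyc x z y w]cycE //.
case: (eqVneq w x) => [->|wx]; first by rewrite cycE // (negbTE zx) (negbTE zy) eqxx.
case: (eqVneq w z) => [->|wz]; first by rewrite cycE // (negbTE yx) eqxx.
case: (eqVneq w y) => [->|wy]; first by rewrite cycE // eqxx.
by rewrite cycE // (negbTE wx) (negbTE wy) (negbTE wz).
Qed.

Lemma cycJ x y z (s : {perm T}) : (cyc x y z) ^ s = cyc (s x) (s y) (s z).
Proof. by rewrite /cyc conjMg !tpermJ. Qed.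

Lemma odd_cyc x y z : x != y -> z != x -> odd_perm (cyc x y z) = false.
Proof. by move=> xy zx; rewrite /cyc odd_permM !odd_tperm xy eq_sym zx. Qed.

End Cyc.
Local Open Scope group_scope.

Section Gen.
Variable T : finType.
Variable A : {set T}.
Variable R : {perm T} -> Prop.
Hypothesis R1 : R 1.
Hypothesis RM : forall s t, R s -> R t -> R (s * t).
Hypothesis RV : forall s, R s -> R s^-1.
Hypothesis Ron : forall s, R s -> perm_on A s.
Implicit Types x y z w d e f : T.

Definition Rl (x y z : T) : Prop := [&& x != y, y != z & z != x] /\ R (cyc x y z).

Lemma cyc1 x y z : x != y -> y != z -> z != x -> cyc x y z x = y.
Proof. by move=> *; rewrite cycE // eqxx. Qed.
Lemma cyc2 x y z : x != y -> y != z -> z != x -> cyc x y z y = z.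
Proof. by move=> xy *; rewrite cycE // eq_sym (negbTE xy) eqxx. Qed.
Lemma cyc3 x y z : x != y -> y != z -> z != x -> cyc x y z z = x.
Proof. by move=> xy yz zx; rewrite cycE // (negbTE zx) eq_sym (negbTE yz) eqxx. Qed.
Lemma cyc0 x y z w : x != y -> y != z -> z != x -> w != x -> w != y -> w != z ->
  cyc x y z w = w.
Proof. by move=> xy yz zx wx wy wz; rewrite cycE // (negbTE wx) (negbTE wy) (negbTE wz). Qed.

Lemma Rl_rot x y z : Rl x y z -> Rl y z x.
Proof.
case=> /and3P[xy yz zx] Hr; split; first by rewrite yz zx xy.
by rewrite -cyc_rot.
Qed.

Lemma Rl_inv x y z : Rl x y z -> Rl x z y.
Proof.
case=> /and3P[xy yz zx] Hr; split; first by apply/and3P; split; rewrite eq_sym.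
by rewrite -cycV //; apply: RV.
Qed.

Lemma Rl_conj s x y z : R s -> Rl x y z -> Rl (s x) (s y) (s z).
Proof.
move=> Rs [/and3P[xy yz zx] Hr]; split.
  by rewrite !(inj_eq perm_inj) xy yz zx.
rewrite -cycJ; have -> : (cyc x y z) ^ s = s^-1 * (cyc x y z * s) by [].
by apply: RM; [exact: RV | exact: RM].
Qed.

Lemma Rl_in x y z : Rl x y z -> x \in A.
Proof.
case=> /and3P[xy yz zx] Hr; have := Ron Hr => /subsetP; apply.
by rewrite inE cyc1 // eq_sym.
Qed.

Lemma Rl_dist x y z : Rl x y z -> [&& x != y, y != z & z != x].
Proof. by case. Qed.

Ltac dist H := let h := fresh in have h := Rl_dist H; case/and3P: h.
Ltac neqs := repeat match goal with
 | H : is_true (?x != ?y) |- context [?x == ?y] => rewrite (negbTE H)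
 | H : is_true (?x != ?y) |- context [?y == ?x] => rewrite (eq_sym y x) (negbTE H)
 end.
Ltac cs := rewrite ?cycE; try (by []); try (by rewrite eq_sym); rewrite ?eqxx; neqs; rewrite ?eqxx /=.

Variables a b c0 : T.
Hypothesis Habc : Rl a b c0.

Definition S y := y = a \/ y = b \/ Rl a b y.

Lemma S_gen d e f : Rl a b d -> Rl d e f -> S e.
Proof.
move=> H1 H2; dist H1 => ab bd da; dist H2 => de ef fd.
case: (eqVneq e a) => [->|ea]; first by left.
case: (eqVneq e b) => [->|eb]; first by right; left.
right; right.
case: (eqVneq f a) => [fa|fa].
  subst f.
  have := Rl_conj (proj2 H2) H1; cs => H3.
  have H4 := Rl_rot H3.
  have := Rl_conj (proj2 H4) H1; cs.
  by move/Rl_inv.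
case: (eqVneq f b) => [fb|fb].
  subst f.
  have := Rl_conj (proj2 H2) H1; cs => H3.
  have H4 := Rl_inv H3.
  have := Rl_conj (proj2 H4) H1; cs.
  by move/Rl_rot/Rl_rot/Rl_inv.
by have := Rl_conj (proj2 H2) H1; cs.
Qed.

Lemma S_step d e f : S d -> Rl d e f -> S e.
Proof.
move=> [->|[->|Hd]] H2; last exact: S_gen H2.
- dist H2 => de ef fd; dist Habc => ab bc ca.
  case: (eqVneq e b) => [->|eb]; first by right; left.
  right; right.
  case: (eqVneq f b) => [fb|fb]; first by subst f; apply: Rl_inv.
  case: (eqVneq c0 e) => [<-|ce] //.
  case: (eqVneq c0 f) => [cf|cf].
    subst c0; have := Rl_conj (proj2 H2) Habc; cs.
    by move/Rl_rot/Rl_rot/Rl_inv.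
  have := Rl_conj (proj2 H2) Habc; cs => H3.
  have := S_gen Habc (Rl_rot (Rl_rot H3)).
  case=> [ea|[eb'|//]]; first by rewrite ea eqxx in de.
  by rewrite eb' eqxx in eb.
- dist H2 => de ef fd; dist Habc => ab bc ca.
  case: (eqVneq e a) => [->|ea]; first by left.
  right; right.
  case: (eqVneq f a) => [fa|fa]; first by subst f; apply: Rl_rot; apply: Rl_rot.
  case: (eqVneq c0 e) => [<-|ce] //.
  case: (eqVneq c0 f) => [cf|cf].
    subst c0; have := Rl_conj (proj2 H2) Habc; cs.
    by move/Rl_inv.
  have := Rl_conj (proj2 H2) Habc; cs => H3.
  have := S_gen Habc (Rl_inv (Rl_rot (Rl_rot H3))).
  case=> [ea'|[eb|//]]; first by rewrite ea' eqxx in ea.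
  by rewrite eb eqxx in de.
Qed.


Lemma full_of_pair : a != b ->
  (forall x, x \in A -> x != a -> x != b -> Rl a b x) ->
  forall x y z, x \in A -> y \in A -> z \in A -> x != y -> y != z -> z != x -> Rl x y z.
Proof.
move=> ab H.
have Ha : forall x y, x \in A -> y \in A -> x != a -> x != b -> y != a -> y != b -> x != y ->
    Rl a x y.
  move=> x y xA yA xa xb ya yb xy.
  have H1 := Rl_inv (H x xA xa xb).
  have := Rl_conj (proj2 H1) (H y yA ya yb); cs.
  by move/Rl_rot/Rl_inv.
have Hb : forall x y, x \in A -> y \in A -> x != a -> x != b -> y != a -> y != b -> x != y ->
    Rl b x y.
  move=> x y xA yA xa xb ya yb xy.
  have H1 := H x xA xa xb.
  by have := Rl_conj (proj2 H1) (H y yA ya yb); cs.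
have Hn : forall x y z, x \in A -> y \in A -> z \in A -> x != a -> x != b -> y != a -> y != b ->
    z != a -> z != b -> x != y -> y != z -> z != x -> Rl x y z.
  move=> x y z xA yA zA xa xb ya yb za zb xy yz zx.
  have H1 := Rl_rot (H x xA xa xb).
  have := Rl_conj (proj2 H1) (Hb y z yA zA ya yb za zb yz); cs.
  by [].
move=> x y z xA yA zA xy yz zx.
case: (eqVneq x a) => [?|xa]; first subst x.
  case: (eqVneq y b) => [?|yb]; first by subst y; apply: H; rewrite // eq_sym.
  case: (eqVneq z b) => [?|zb]; first by subst z; apply: Rl_inv; apply: H; rewrite // eq_sym.
  by apply: Ha; rewrite // eq_sym.
case: (eqVneq x b) => [?|xb]; first subst x.
  case: (eqVneq y a) => [?|ya]; first by subst y; apply: Rl_inv; apply: Rl_rot; apply: H; rewrite // eq_sym.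
  case: (eqVneq z a) => [?|za]; first by subst z; apply: Rl_rot; apply: H; rewrite // eq_sym.
  by apply: Hb; rewrite // eq_sym.
case: (eqVneq y a) => [?|ya]; first subst y.
  apply: Rl_rot; apply: Rl_rot.
  case: (eqVneq z b) => [?|zb]; first by subst z; apply: H.
  by apply: Ha; rewrite // eq_sym.
case: (eqVneq y b) => [?|yb]; first subst y.
  apply: Rl_rot; apply: Rl_rot.
  case: (eqVneq z a) => [?|za]; first by subst z; apply: Rl_inv; apply: Rl_rot; apply: H.
  by apply: Hb; rewrite // eq_sym.
case: (eqVneq z a) => [?|za]; first by subst z; apply: Rl_rot; apply: Ha.
case: (eqVneq z b) => [?|zb]; first by subst z; apply: Rl_rot; apply: Hb.
exact: Hn.
Qed.

Lemma even_R :
  (forall x y z, x \in A -> y \in A -> z \in A -> x != y -> y != z -> z != x -> Rl x y z) ->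
  forall s, perm_on A s -> ~~ odd_perm s -> R s.
Proof.
move=> Hf s.
move: {2}#|[set w | s w != w]| (leqnn #|[set w | s w != w]|) => N.
elim: N s => [|N IH] s.
  rewrite leqn0 => /eqP/cards0_eq Hs _ _.
  have -> : s = 1; last exact: R1.
  apply/permP=> w; rewrite perm1; apply/eqP; apply: contraT => hw.
  have hin : w \in [set w | s w != w] by rewrite inE.
  by rewrite Hs inE in hin.
move=> Hc Hon Hodd.
case: (eqVneq s 1) => [->|sn1]; first exact: R1.
have [x hx] : exists x, s x != x.
  apply/existsP; apply: contraT; rewrite negb_exists => /forallP hall.
  case/eqP: sn1; apply/permP=> w; rewrite perm1; have := hall w; by rewrite negbK => /eqP.
have inA : forall w, s w != w -> w \in A.
  by move=> w hw; apply: (subsetP Hon); rewrite inE.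
set y := s x; set z := s y.
have xy : x != y by rewrite eq_sym.
have hy : s y != y by apply: contra xy => /eqP e; apply/eqP; apply: (@perm_inj _ s).
have yz : y != z by rewrite eq_sym.
have [w [yw wx hw Hw]] : exists w, [/\ y != w, w != x, s w != w &
    forall u, s u = u -> u != x /\ u != y /\ u != w].
  case: (eqVneq z x) => [zx|zx].
    have [w hw] : exists w, [&& s w != w, w != x & w != y].
      apply/existsP; apply: contraT; rewrite negb_exists => /forallP hall.
      have es : s = tperm x y.
        apply/permP=> u; case: (tpermP x y u) => [->|->|ux uy] //.
        have ux' : u != x by apply/eqP.
        have uy' : u != y by apply/eqP.
        by have := hall u; rewrite ux' uy' !andbT negbK => /eqP.
      by move: Hodd; rewrite es odd_tperm xy.
    case/and3P: hw => hw wx wy.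
    exists w; split => //; first by rewrite eq_sym.
    move=> u su; split; [|split]; apply/negP => /eqP eu; subst u.
    - by rewrite su eqxx in hx.
    - by rewrite su eqxx in hy.
    - by rewrite su eqxx in hw.
  have hz : s z != z by apply: contra yz => /eqP e; apply/eqP; apply: (@perm_inj _ s).
  exists z; split => //.
  move=> u su; split; [|split]; apply/negP => /eqP eu; subst u.
  - by rewrite su eqxx in hx.
  - by rewrite su eqxx in hy.
  - by rewrite su eqxx in hz.
have Rc : Rl x y w by apply: Hf; rewrite ?inA.
set c := cyc x y w.
have -> : s = (s * c^-1) * c by rewrite -mulgA mulVg mulg1.
apply: RM; last exact: (proj2 Rc).
have sub : [set u | (s * c^-1) u != u] \subset [set u | s u != u].
  apply/subsetP=> u; rewrite !inE; apply: contraNN => /eqP su.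
  case: (Hw u su) => ux [uy uw].
  rewrite permM su; apply/eqP; apply: (@perm_inj _ c); rewrite permKV /c.
  by rewrite cyc0.
apply: IH.
- rewrite -ltnS; apply: leq_trans Hc; apply: proper_card; rewrite properEneq sub andbT.
  apply/negP => /eqP E.
  have : x \in [set u | s u != u] by rewrite inE.
  rewrite -E inE permM -/y; apply/negP; rewrite negbK; apply/eqP.
  apply: (@perm_inj _ c); rewrite permKV /c cyc1 //.
- apply/subsetP=> u hu; apply: inA; move: (subsetP sub u); rewrite !inE; apply; exact: hu.
- by rewrite odd_permM odd_permV /c odd_cyc // addbF.
Qed.

End Gen.
Local Open Scope group_scope.

Ltac neqs := repeat match goal with
 | H : is_true (?x != ?y) |- context [?x == ?y] => rewrite (negbTE H)
 | H : is_true (?x != ?y) |- context [?y == ?x] => rewrite (eq_sym y x) (negbTE H)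
 end.

Section Main.
Variables k n : nat.
Hypothesis hk : 2 <= k.
Hypothesis hn : 3 <= n.
Local Notation pos := (pos k n).
Local Notation move := (move k n).
Implicit Types (p q : pos) (m : move) (g : combination k n) (i j l : 'I_n).

Variable A : {set pos}.
Variable p0 : pos.
Hypothesis HA : forall q, q \in A <-> exists g, valid_comb g /\ comb_pos g p0 = q.

Definition l0 : 'I_n := Ordinal (leq_trans (isT : 0 < 3) hn).

Lemma A_closed g p : valid_comb g -> p \in A -> comb_pos g p \in A.
Proof.
move=> vg /HA [g0 [v0 e0]]; apply/HA; exists (g0 ++ g); split.
  by rewrite /valid_comb all_cat; apply/andP.
by rewrite comb_pos_cat e0.
Qed.

Lemma p0A : p0 \in A.
Proof. by apply/HA; exists [::]. Qed.

Definition real (s : {perm pos}) : Prop := perm_on A s /\ exists g, valid_comb g /\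
  (forall p, p \in A -> comb_pos g p = s p) /\ (forall u, u.1 \notin A -> comb_X g u = u).

Lemma real1 : real 1.
Proof.
split; first exact: perm_on1.
by exists [::]; split => //; split => // p _; rewrite perm1.
Qed.

Lemma realM s t : real s -> real t -> real (s * t).
Proof.
move=> [Hs [g1 [v1 [e1 f1]]]] [Ht [g2 [v2 [e2 f2]]]]; split; first exact: perm_onM.
exists (g1 ++ g2); split; first by rewrite /valid_comb all_cat; apply/andP.
split=> [p pA|u uA]; first by rewrite comb_pos_cat e1 // e2 ?permM // (perm_closed _ Hs).
by rewrite comb_X_cat f1 // f2.
Qed.

Lemma realV s : real s -> real s^-1.
Proof.
move=> [Hs [g [v [e f]]]]; split; first exact: perm_onV.
exists (inv_comb g); split; first exact: valid_inv_comb.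
split=> [p pA|u uA].
  have : s^-1 p \in A by rewrite (perm_closed _ (perm_onV Hs)).
  by move=> hA; rewrite -{1}(permKV s p) -e // comb_pos_invK.
by rewrite -{1}(f u uA) comb_X_invK.
Qed.

Lemma real_on s : real s -> perm_on A s.
Proof. by case. Qed.

Lemma comm_real gs m q : valid_comb gs -> valid_move m -> q \in A ->
  comb_pos gs q != q -> move_pos m q != q ->
  (forall p, p != q -> fixd (comb_X gs) p || fixd (move_X m) p) ->
  Rl real q (move_pos m q) (comb_pos (inv_comb gs) q).
Proof.
move=> vg vm qA fq mq Hs.
pose F := comb_X gs; pose F' := comb_X (inv_comb gs).
pose H := move_X (inv_move m); pose H' := move_X m.
pose f := comb_pos gs; pose f' := comb_pos (inv_comb gs).
pose h := move_pos (inv_move m); pose h' := move_pos m.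
have FK : cancel F F' by move=> x; apply: comb_X_invK.
have F'K : cancel F' F by move=> x; apply: comb_X_Kinv.
have HK : cancel H H' by move=> x; apply: move_XKV.
have H'K : cancel H' H by move=> x; apply: move_XK.
have Ff : forall u, (F u).1 = f u.1 by move=> u; apply: comb_X_fst.
have Ff' : forall u, (F' u).1 = f' u.1 by move=> u; apply: comb_X_fst.
have Hh : forall u, (H u).1 = h u.1 by move=> u; apply: move_X_fst.
have Hh' : forall u, (H' u).1 = h' u.1 by move=> u; apply: move_X_fst.
have Hsup : forall p, p != q -> fixd F p || fixd H p.
  move=> p pq; case/orP: (Hs p pq) => [->//|fx]; apply/orP; right.
  exact: (fixd_inv H'K fx).
have hq : h q != q.
  by apply: contra mq => /eqP e; rewrite -{1}e /h /h' move_posKV.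
have cq := comm_q l0 h' FK Ff Ff' Hh Hsup fq.
have ch := comm_h'q l0 F'K HK H'K Ff Ff' Hh Hh' Hsup fq hq.
have cf := comm_f'q l0 FK F'K HK Ff Ff' Hh Hh' Hsup hq.
have cfix := comm_fix l0 FK HK Ff Ff' Hh Hh' Hsup.
have cd := comm_dist l0 F'K H'K Ff Ff' Hh Hh' Hsup fq hq.
have n1 := f'q_neq l0 F'K Ff Ff' fq.
have n2 := h'q_neq l0 H'K Hh Hh' hq.
set x := f' q in cf cfix cd n1 *; set y := h' q in ch cq cfix cd n2 *.
have xA : x \in A by apply: A_closed => //; exact: valid_inv_comb.
have yA : y \in A by apply: (A_closed (g := [:: m])) => //=; rewrite andbT.
have qy : q != y by rewrite eq_sym.
have yx : y != x by rewrite eq_sym.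
have xq : x != q by [].
split; first by rewrite qy yx xq.
split.
  apply/subsetP=> w; rewrite inE; apply: contraR => wA.
  rewrite cycE //; case: (eqVneq w q) => [e|wq]; first by rewrite e qA in wA.
  case: (eqVneq w y) => [e|wy]; first by rewrite e yA in wA.
  by case: (eqVneq w x) => [e|wx]; [rewrite e xA in wA|].
pose C := gs ++ [:: inv_move m] ++ inv_comb gs ++ [:: m].
have CX : forall u, comb_X C u = H' (F' (H (F u))).
  by move=> u; rewrite !comb_X_cat.
have CP : forall p, comb_pos C p = h' (f' (h (f p))).
  by move=> p; rewrite !comb_pos_cat.
exists C; split.
  rewrite /valid_comb !all_cat /= vm valid_inv vm /= !andbT; apply/andP; split => //.
  exact: valid_inv_comb.
split=> [p pA|u uA].
  rewrite CP cycE //.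
  case: (eqVneq p q) => [->|pq]; first by rewrite cq.
  case: (eqVneq p y) => [->|py]; first by rewrite ch.
  case: (eqVneq p x) => [->|px]; first by rewrite cf.
  have := cfix (p, l0) pq px py.
  by move=> e; rewrite -[p]/((p, l0).1) -Ff -Hh -Ff' -Hh' e.
rewrite CX; apply: cfix.
- by apply: contra uA => /eqP ->.
- by apply: contra uA => /eqP ->.
- by apply: contra uA => /eqP ->.
Qed.


Lemma fixd_out m p : ~~ in_layer m p -> fixd (move_X m) p.
Proof. by move=> h; apply/forallP=> l; rewrite /move_X /= (negbTE h). Qed.

Lemma option_ok i j c q r s l x y :
  i != j -> in_layer (i, j, c) q ->
  l != i -> l != j -> r != s -> ((r == i) && (s == j) || (r == j) && (s == i)) ->
  x != y -> ((x == s) && (y == l) || (x == l) && (y == s)) ->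
  psi x y q l != q l ->
  psi i j (psi x y q) != psi x y q ->
  exists gs, [/\ valid_comb gs, comb_pos gs q != q &
    forall p, p != q -> fixd (comb_X gs) p || fixd (move_X (i, j, c)) p].
Proof.
move=> ij qL li lj rs hrs xy hxy C1 C2.
pose R : move := (x, y, q).
pose D : move := (i, j, psi x y q).
have vR : valid_move R by [].
have vD : valid_move D by [].
have RL : forall p, in_layer R p = [forall t, (t != x) && (t != y) ==> (p t == q t)] by [].
have Rq : move_pos R q = psi x y q.
  by rewrite /move_pos; have -> : in_layer R q by apply/in_layerP.
have DY : move_pos D (psi x y q) = psi i j (psi x y q).
  by rewrite /move_pos; have -> : in_layer D (psi x y q) by apply/in_layerP.
have sl : s != l by apply/negP=> /eqP e; subst s; case/orP: hrs => /andP[_ /eqP e]; subst l;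
  rewrite eqxx in li lj.
have rl : r != l by apply/negP=> /eqP e; subst r; case/orP: hrs => /andP[/eqP e _]; subst l;
  rewrite eqxx in li lj.
have tij : forall t, t != r -> t != s -> (t != i) && (t != j).
  move=> t tr ts; case/orP: hrs => /andP[/eqP e1 /eqP e2]; subst r s; by rewrite ?tr ?ts.
have Hq : forall t, t != i -> t != j -> q t = c t by move: qL => /in_layerP.
have core : forall p, in_layer (i, j, c) p -> in_layer D (move_pos R p) -> p = q.
  move=> p /in_layerP /= Hp hD.
  case hR: (in_layer R p).
    move: hD; rewrite /move_pos hR => /in_layerP /= hD.
    have el := hD l li lj.
    have Hr : forall t, t != x -> t != y -> p t = q t by move: hR => /in_layerP.
    have es : p s = q s.
      case/orP: hxy => /andP[/eqP ex /eqP ey]; subst x y; move: el; rewrite !psiE.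
        by rewrite eq_sym (negbTE sl) eqxx.
      by rewrite eqxx => /rev_ord_inj.
    apply/ffunP=> t; case: (eqVneq t s) => [->//|ts].
    case: (eqVneq t r) => [->|tr].
      by apply: Hr; case/orP: hxy => /andP[/eqP ex /eqP ey]; subst x y; rewrite ?rs ?rl // eq_sym.
    case/andP: (tij t tr ts) => ti tj.
    by rewrite Hp // Hq.
  move: hD; rewrite /move_pos hR => /in_layerP /= hD.
  have := hD l li lj; rewrite Hp // -Hq // => e.
  by rewrite e eqxx in C1.
exists [:: R; D; inv_move R]; split.
- by rewrite /valid_comb /= vR vD valid_inv vR.
- rewrite !comb_pos_cons /= Rq DY; apply: contra C2 => /eqP e.
  by have := congr1 (move_pos R) e; rewrite move_posKV // Rq => ->.
- move=> p pq.
  case hm: (in_layer (i, j, c) p); last by rewrite fixd_out ?orbT // hm.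
  case hd: (in_layer D (move_pos R p)); first by rewrite (core p hm hd) eqxx in pq.
  apply/orP; left; apply/forallP=> t.
  rewrite !comb_X_cons /=.
  have -> : move_X D (move_X R (p, t)) = move_X R (p, t).
    by rewrite /move_X move_X_fst hd.
  by rewrite move_XK.
Qed.


Lemma psi_fix i j (Y : pos) : i != j -> psi i j Y = Y -> Y i = Y j /\ rev_ord (Y j) = Y i.
Proof.
move=> ij e; split.
  by have := congr1 (fun Z : pos => Z j) e; rewrite psiE eq_sym (negbTE ij) eqxx.
by have := congr1 (fun Z : pos => Z i) e; rewrite psiE eqxx.
Qed.

Lemma psi_fix_conv i j (Y : pos) : Y i = Y j -> rev_ord (Y j) = Y i -> psi i j Y = Y.
Proof.
move=> e1 e2; apply/ffunP=> u; rewrite psiE.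
case: (eqVneq u i) => [->|ui] //; case: (eqVneq u j) => [->|uj] //.
Qed.

Lemma fail_mid i j l (q : pos) : i != j -> l != i -> l != j ->
  ~~ ((psi j l q l != q l) && (psi i j (psi j l q) != psi j l q)) ->
  ~~ ((psi l j q l != q l) && (psi i j (psi l j q) != psi l j q)) ->
  q l = rev_ord (q l) /\ (q i = q l \/ q j = q l).
Proof.
move=> ij li lj; rewrite !negb_and !negbK => /orP[/eqP e1|/eqP e1] /orP[/eqP e2|/eqP e2].
- move: e1 e2; rewrite !psiE eqxx (negbTE lj) => e1 e2.
  by split; [rewrite -{1}e2 e1 | right].
- have [f1 f2] := psi_fix ij e2; move: f1 f2.
  rewrite !psiE ?eqxx; neqs; rewrite ?eqxx => f1 f2.
  by split; [rewrite f2 f1 | left].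
- have [f1 f2] := psi_fix ij e1; move: f1 f2.
  rewrite !psiE ?eqxx; neqs; rewrite ?eqxx rev_ordK => f1 f2.
  by split; [rewrite -f1 f2 | left].
- have [f1 f2] := psi_fix ij e1; move: f1 f2.
  rewrite !psiE ?eqxx; neqs; rewrite ?eqxx rev_ordK => f1 f2.
  by split; [rewrite -f1 f2 | left].
Qed.


Lemma exists_other (i j : 'I_n) : exists l : 'I_n, (l != i) && (l != j).
Proof.
case: (pickP [pred l : 'I_n | (l != i) && (l != j)]) => [l hl|none]; first by exists l.
have : [set: 'I_n] \subset [set i; j].
  apply/subsetP=> l _; have := none l; rewrite /= !inE.
  by case: (l == i); case: (l == j).
move/subset_leq_card; rewrite cardsT card_ord cards2 => h.
have : 3 <= (i != j).+1 by apply: leq_trans hn h.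
by case: (i != j).

Qed.

Definition bnd (v : 'I_k) := ((v : nat) == 0) || ((v : nat) == k.-1).

Lemma Bset_in (p : pos) u : (u \in Bset p) = bnd (p u).
Proof. by rewrite inE. Qed.

Lemma bnd_rev v : bnd (rev_ord v) = bnd v.
Proof.
rewrite /bnd /=; have := ltn_ord v; move: (v : nat) => x hx.
apply/idP/idP => /orP[] /eqP e; apply/orP; lia.
Qed.

Lemma ext_move m p : valid_move m -> external p -> external (move_pos m p).
Proof.
move=> vm; rewrite /external /move_pos; case: ifP => // _.
case/set0Pn=> u; rewrite Bset_in => hu; apply/set0Pn.
case: m vm => [[i j] c] /= ij.
case: (eqVneq u i) => [e|ui].
  by exists j; rewrite Bset_in psiE eq_sym (negbTE ij) eqxx -e.
case: (eqVneq u j) => [e|uj].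
  by exists i; rewrite Bset_in psiE eqxx bnd_rev -e.
by exists u; rewrite Bset_in psiE (negbTE ui) (negbTE uj).
Qed.

Hypothesis p0ext : external p0.
Hypothesis Hnf : ~~ is_frame_class A.

Lemma ext_A q : q \in A -> external q.
Proof.
case/HA=> g [vg <-]; elim: g p0 p0ext vg => [//|m g IH] p hp /andP[vm vg].
by rewrite comb_pos_cons; apply: IH => //; apply: ext_move.
Qed.

Section Frame.
Variable h : nat.
Hypothesis kh : k = h.*2.+1.

Lemma h_lt : h < k. Proof. rewrite kh; lia. Qed.
Definition midO : 'I_k := Ordinal h_lt.

Lemma rev_midO : rev_ord midO = midO.
Proof. apply: val_inj => /=; rewrite kh; lia. Qed.

Lemma bnd_mid : bnd midO = false.
Proof. rewrite /bnd /=; have := hk; rewrite kh => hk'; apply/negP => /orP[/eqP|/eqP]; lia. Qed.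

Lemma mid_half : k.-1./2 = h.
Proof. by rewrite kh /= half_double. Qed.

Definition fr t (w : 'I_k) : pos := [ffun u => if u == t then w else midO].

Lemma fr_in t w : bnd w -> fr t w \in frame_set k n.
Proof.
move=> bw.
have BS : Bset (fr t w) = [set t].
  apply/setP=> u; rewrite Bset_in inE ffunE.
  by case: (eqVneq u t) => [_|ut]; rewrite ?bw ?bnd_mid.
rewrite inE BS cards1 eqxx /=; apply/forallP=> u; apply/implyP; rewrite inE => ut.
by rewrite ffunE (negbTE ut) /= mid_half.
Qed.

Lemma in_fr x : x \in frame_set k n -> exists t, bnd (x t) /\ x = fr t (x t).
Proof.
rewrite inE => /andP[/cards1P[t Ht] /forallP Hm].
have tB : t \in Bset x by rewrite Ht inE.
exists t; split; first by rewrite -Bset_in.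
apply/ffunP=> u; rewrite ffunE; case: (eqVneq u t) => [->//|ut].
have : u \notin Bset x by rewrite Ht inE.
move=> uB; have := implyP (Hm u) uB; rewrite mid_half => /eqP e.
by apply: val_inj.
Qed.

Lemma psi_fr i j t w : i != j ->
  psi i j (fr t w) = if t == i then fr j w else if t == j then fr i (rev_ord w) else fr t w.
Proof.
move=> ij; have ji : j != i by rewrite eq_sym.
apply/ffunP=> u; rewrite psiE.
case: (eqVneq t i) => [e1|ti]; [|case: (eqVneq t j) => [e2|tj]];
case: (eqVneq u i) => [e3|ui]; case: (eqVneq u j) => [e4|uj]; subst;
  rewrite ?ffunE ?eqxx ?rev_midO; neqs; rewrite ?eqxx ?rev_midO //;
  by move: ij; rewrite eqxx.
Qed.

Lemma frame_closed g x : valid_comb g -> x \in frame_set k n -> comb_pos g x \in frame_set k n.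
Proof.
elim: g x => [//|m g IH] x /andP[vm vg] xF; rewrite comb_pos_cons; apply: IH => //.
rewrite /move_pos; case: ifP => // _.
case: (in_fr xF) => t [bt ->]; case: m vm => [[i j] c] /= ij.
rewrite psi_fr //; case: (t == i); first exact: fr_in.
by case: (t == j); apply: fr_in; rewrite ?bnd_rev.
Qed.

Lemma fr_step1 t u v : u != t -> comb_pos [:: ((t, u, fr t v) : move)] (fr t v) = fr u v.
Proof.
move=> ut; rewrite comb_pos_move /move_pos.
have -> : in_layer ((t, u, fr t v) : move) (fr t v) by apply/in_layerP.
by rewrite /= psi_fr 1?eq_sym // eqxx.
Qed.

Lemma fr_step2 t u v : u != t -> comb_pos [:: ((u, t, fr t v) : move)] (fr t v) = fr u (rev_ord v).
Proof.
move=> ut; rewrite comb_pos_move /move_pos.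
have -> : in_layer ((u, t, fr t v) : move) (fr t v) by apply/in_layerP.
by rewrite /= psi_fr // eq_sym (negbTE ut) eqxx.
Qed.

Lemma bnd_cases v w : bnd v -> bnd w -> w = v \/ w = rev_ord v.
Proof.
move=> /orP[/eqP v0|/eqP v1] /orP[/eqP w0|/eqP w1].
- by left; apply: val_inj; rewrite /= v0 w0.
- by right; apply: val_inj; rewrite /= v0 w1 subn1.
- by right; apply: val_inj; rewrite /= v1 w0; have := hk; lia.
- by left; apply: val_inj; rewrite /= v1 w1.
Qed.

Lemma reach1 t u v w : u != t -> bnd v -> bnd w ->
  exists g, valid_comb g /\ comb_pos g (fr t v) = fr u w.
Proof.
move=> ut bv bw; case: (bnd_cases bv bw) => ->.
  exists [:: ((t, u, fr t v) : move)]; split; last exact: fr_step1.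
  by rewrite /valid_comb /= andbT /valid_move /= eq_sym.
exists [:: ((u, t, fr t v) : move)]; split; last exact: fr_step2.
by rewrite /valid_comb /= andbT.
Qed.

Lemma reach t u v w : bnd v -> bnd w ->
  exists g, valid_comb g /\ comb_pos g (fr t v) = fr u w.
Proof.
move=> bv bw; case: (eqVneq u t) => [->|ut]; last exact: reach1.
have [u' /andP[u't _]] := exists_other t t.
have [g1 [v1 e1]] := reach1 u't bv bv.
have [g2 [v2 e2]] : exists g, valid_comb g /\ comb_pos g (fr u' v) = fr t w.
  by apply: reach1; rewrite // eq_sym.
exists (g1 ++ g2); split; first by rewrite /valid_comb all_cat; apply/andP.
by rewrite comb_pos_cat e1 e2.
Qed.

End Frame.

Lemma frame_contra q (t : 'I_n) : q \in A ->
  (forall u, u != t -> q u = rev_ord (q u)) -> False.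
Proof.
move=> qA Hm.
have [u /andP[ut _]] := exists_other t t.
have := Hm u ut => /(congr1 val) /= e.
have kh : k = (q u : nat).*2.+1 by have := ltn_ord (q u); rewrite -addnn; lia.
have qfr : q = fr kh t (q t).
  apply/ffunP=> w; rewrite ffunE; case: (eqVneq w t) => [->//|wt].
  by apply: val_inj => /=; have := Hm w wt => /(congr1 val) /= e2; have := ltn_ord (q w); lia.
have bt : bnd (q t).
  have := ext_A qA; case/set0Pn=> w; rewrite Bset_in.
  case: (eqVneq w t) => [->//|wt].
  by rewrite qfr ffunE (negbTE wt) bnd_mid.
have [g0' [v0' e0']] := (proj1 (HA q)) qA.
have AF : A = frame_set k n.
  apply/setP=> x; apply/idP/idP.
    case/HA=> g [vg <-].
    have -> : p0 = comb_pos (inv_comb g0') q by rewrite -e0' comb_pos_invK.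
    rewrite -comb_pos_cat; apply: (frame_closed kh).
      by rewrite /valid_comb all_cat; apply/andP; split => //; apply: valid_inv_comb.
    by rewrite qfr; apply: fr_in.
  move=> xF; have [w [bw ->]] := in_fr kh xF.
  have [g [vg eg]] := reach kh t w bt bw.
  by rewrite -eg -qfr; apply: A_closed.
move: Hnf; rewrite /is_frame_class AF eqxx andbT kh /=.
by rewrite odd_double.
Qed.

Lemma geom m q : valid_move m -> q \in A -> move_pos m q != q ->
  exists w, Rl real q (move_pos m q) w.
Proof.
case: m => [[i j] c] vm qA mq.
have ij : i != j := vm.
have qL : in_layer (i, j, c) q.
  by apply: contraR mq => h; rewrite /move_pos (negbTE h).
pose opt1 l := (psi j l q l != q l) && (psi i j (psi j l q) != psi j l q).
pose opt2 l := (psi l j q l != q l) && (psi i j (psi l j q) != psi l j q).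
case: (boolP [exists l, (l != i) && (l != j) && (opt1 l || opt2 l)]).
  case/existsP=> l /andP[/andP[li lj] /orP[/andP[C1 C2]|/andP[C1 C2]]].
    have [gs [vg fq Hs]] : exists gs, [/\ valid_comb gs, comb_pos gs q != q &
      forall p, p != q -> fixd (comb_X gs) p || fixd (move_X (i, j, c)) p].
      apply: (@option_ok i j c q i j l j l) => //.
        by rewrite !eqxx.
      by rewrite eq_sym lj.
      by rewrite !eqxx.
    by exists (comb_pos (inv_comb gs) q); apply: comm_real.
  have [gs [vg fq Hs]] : exists gs, [/\ valid_comb gs, comb_pos gs q != q &
      forall p, p != q -> fixd (comb_X gs) p || fixd (move_X (i, j, c)) p].
    apply: (@option_ok i j c q i j l l j) => //.
      by rewrite !eqxx.
    by rewrite !eqxx orbT.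
  by exists (comb_pos (inv_comb gs) q); apply: comm_real.
rewrite negb_exists => /forallP H.
have Hm : forall l, l != i -> l != j -> q l = rev_ord (q l) /\ (q i = q l \/ q j = q l).
  move=> l li lj; have := H l; rewrite li lj /= negb_or => /andP[h1 h2].
  exact: fail_mid.
have [l1 /andP[l1i l1j]] := exists_other i j.
have [ml1 [ei|ej]] := Hm l1 l1i l1j.
  exfalso; apply: (frame_contra (t := j) qA) => u uj.
  case: (eqVneq u i) => [->|ui]; first by rewrite ei.
  by case: (Hm u ui uj).
exfalso; apply: (frame_contra (t := i) qA) => u ui.
case: (eqVneq u j) => [->|uj]; first by rewrite ej.
by case: (Hm u ui uj).
Qed.


Lemma main_real s : perm_on A s -> ~~ odd_perm s -> real s.
Proof.
move=> son sodd.
case: (boolP [exists m : move, valid_move m && (move_pos m p0 != p0)]).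
  case/existsP=> m /andP[vm mp].
  have [w Hw] := geom vm p0A mp.
  set b := move_pos m p0 in Hw mp.
  have step : forall g y, valid_comb g -> y \in A -> S real p0 b y -> S real p0 b (comb_pos g y).
    elim=> [//|m' g IH] y vg yA Sy.
    have /andP[vm' {}vg] : valid_move m' && valid_comb g := vg.
    rewrite comb_pos_cons.
    have my_A : move_pos m' y \in A by apply: (A_closed (g := [:: m'])) => //=; rewrite vm'.
    apply: IH => //.
    case: (eqVneq (move_pos m' y) y) => [->//|my].
    have [w' Hw'] := geom vm' yA my.
    exact: (S_step realM realV Hw Sy Hw').
  have allS : forall x, x \in A -> S real p0 b x.
    move=> x /HA [g [vg <-]]; apply: step => //; [exact: p0A | by left].
  have ab : p0 != b by rewrite eq_sym.
  apply: (even_R real1 realM _ son sodd) => x y z xA yA zA xy yz zx.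
  apply: (@full_of_pair _ A real realM realV p0 b ab) => // x' x'A x'a x'b.
  by case: (allS x' x'A) => [e|[e|//]]; [rewrite e eqxx in x'a | rewrite e eqxx in x'b].
rewrite negb_exists => /forallP Hn.
have A1 : forall x, x \in A -> x = p0.
  move=> x /HA [g [vg <-]]; elim: g vg => [//|m g IH].
  move=> vg'; have /andP[vm vg] : valid_move m && valid_comb g := vg'.
  rewrite comb_pos_cons; have := Hn m; rewrite vm /= negbK => /eqP ->.
  exact: IH.
have -> : s = 1; last exact: real1.
apply/permP=> p; rewrite perm1; apply/eqP; apply: contraT => sp.
have pA : p \in A by apply: (subsetP son); rewrite inE.
have spA : s p \in A by rewrite (perm_closed _ son).
by move: sp; rewrite (A1 _ spA) (A1 _ pA) eqxx.
Qed.

End Main.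

Theorem mainTheorem4 (k n : nat) (hk : 2 <= k) (hn : 3 <= n)
    (A : {set pos k n}) (pi : {perm pos k n}) :
  connectivity_class A -> ~~ is_frame_class A ->
  perm_on A pi -> ~~ odd_perm pi ->
  exists g : combination k n, valid_comb g /\
    (forall p, p \in A -> comb_pos g p = pi p) /\
    (forall q : pos k n, external q -> q \notin A ->
       forall l, l \in Bset q -> comb_X g (q, l) = (q, l)).
Proof.
move=> [p0 [p0ext HA]] Hnf pon podd.
have [_ [g [vg [e f]]]] := main_real hk hn HA p0ext Hnf pon podd.
exists g; split => //; split => // q _ qA l _; exact: f.
Qed.
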